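(* Let $0<q<1$, $\alpha>-1$ and let $n\ge0$ be an integer. The matrix $\big((q^{\alpha+1};q)_{j+k}\big)_{j,k=0}^{n}$ is invertible and \[ \big((q^{\alpha+1};q)_{j+k}\big)_{j,k=0}^{n}{}^{-1}=\left(\sum_{m=0}^{n}\frac{q^{j+k}\,(q^{\alpha+1};q)_m\,(q^{-m};q)_j\,(q^{-m};q)_k}{(q;q)_j\,(q;q)_k\,(q^{\alpha+1};q)_j\,(q^{\alpha+1};q)_k\,(q;q)_m\,q^{(\alpha+1)m}}\right)_{j,k=0}^{n}. \]
   Context: $(a;q)_m=\prod_{i=0}^{m-1}(1-aq^i)$ for integers $m\ge0$ (empty product $=1$); in particular $(q^{-m};q)_j=0$ for $j>m$. *)

(* Defs.v *)
From Stdlib Require Import Reals.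
Open Scope R_scope.

Fixpoint qpoch (a q : R) (m : nat) : R :=
  match m with
  | O => 1
  | S m' => qpoch a q m' * (1 - a * q ^ m')
  end.

(* Square (n+1)x(n+1) matrices indexed by j,k = 0..n, represented as functions.
   B is the (two-sided) inverse of A: A*B = I and B*A = I. *)
Definition is_inverse_matrix (n : nat) (A B : nat -> nat -> R) : Prop :=
  forall j k : nat, (j <= n)%nat -> (k <= n)%nat ->
    sum_f_R0 (fun i => A j i * B i k) n = (if Nat.eqb j k then 1 else 0) /\
    sum_f_R0 (fun i => B j i * A i k) n = (if Nat.eqb j k then 1 else 0).

(* Main.v *)
Require Import Defs.
From Stdlib Require Import Reals Lra Lia Arith.
Open Scope R_scope.

Fixpoint sm (N : nat) (f : nat -> R) : R :=
  match N with O => 0 | S N' => sm N' f + f N' end.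

Lemma sm_ext N f g : (forall i, (i < N)%nat -> f i = g i) -> sm N f = sm N g.
Proof. induction N; simpl; intros H; auto. rewrite IHN by (intros; apply H; lia). rewrite H by lia. auto. Qed.

Lemma sm_zero N f : (forall i, (i < N)%nat -> f i = 0) -> sm N f = 0.
Proof. intros H; rewrite (sm_ext N f (fun _ => 0)) by auto. induction N; simpl; auto. rewrite IHN by (intros; apply H; lia). lra. Qed.

Lemma sm_scal N c f : c * sm N f = sm N (fun i => c * f i).
Proof. induction N; simpl; [ring|]. rewrite <- IHN; ring. Qed.

Lemma sm_plus N f g : sm N (fun i => f i + g i) = sm N f + sm N g.
Proof. induction N; simpl; [ring|]. rewrite IHN; ring. Qed.

Lemma sm_swap N M f : sm N (fun i => sm M (fun j => f i j)) = sm M (fun j => sm N (fun i => f i j)).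
Proof. induction N; simpl. - symmetry; apply sm_zero; auto.
 - rewrite IHN. rewrite <- sm_plus. auto. Qed.

Lemma sm_add_range m N f : sm (m + N) f = sm m f + sm N (fun s => f (m + s)%nat).
Proof. induction N; simpl. - rewrite Nat.add_0_r; ring. - rewrite Nat.add_succ_r; simpl. rewrite IHN; ring. Qed.

Lemma sm_extend N M f : (N <= M)%nat -> (forall i, (N <= i < M)%nat -> f i = 0) -> sm M f = sm N f.
Proof. intros H Hz. replace M with (N + (M - N))%nat by lia. rewrite sm_add_range.
 rewrite (sm_zero (M - N)); [ring|]. intros; apply Hz; lia. Qed.

Lemma sm_single N p f : (p < N)%nat -> (forall i, (i < N)%nat -> i <> p -> f i = 0) -> sm N f = f p.
Proof. intros Hp Hz. replace N with (S p + (N - S p))%nat by lia. rewrite sm_add_range.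
 rewrite (sm_zero (N - S p)); [ |intros i Hi; apply Hz; lia].
 simpl. rewrite sm_zero by (intros; apply Hz; lia). ring. Qed.

Lemma sum_f_sm f n : sum_f_R0 f n = sm (S n) f.
Proof. induction n as [|n IHn]; simpl; [ring|]. rewrite IHn; auto. Qed.

Lemma qp_S x q m : qpoch x q (S m) = qpoch x q m * (1 - x * q ^ m).
Proof. reflexivity. Qed.

Lemma qp_shift x q m : qpoch x q (S m) = (1 - x) * qpoch (x * q) q m.
Proof. induction m. - simpl; ring. - rewrite qp_S, IHm, !qp_S. simpl. ring. Qed.

Lemma qp_add x q i j : qpoch x q (i + j) = qpoch x q i * qpoch (x * q ^ i) q j.
Proof. induction j. - rewrite Nat.add_0_r; simpl; ring.
 - rewrite Nat.add_succ_r, !qp_S, IHj, pow_add. ring. Qed.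

Lemma qp_zero x q m t : (t < m)%nat -> x * q ^ t = 1 -> qpoch x q m = 0.
Proof. induction m; intros Ht Hx; [lia|]. rewrite qp_S.
 destruct (Nat.eq_dec t m). - subst. rewrite Hx; ring.
 - rewrite IHm by (auto; lia). ring. Qed.

Lemma qp_nz x q m : (forall t, (t < m)%nat -> x * q ^ t <> 1) -> qpoch x q m <> 0.
Proof. induction m; intros H; simpl. - lra.
 - apply Rmult_integral_contrapositive; split. apply IHm; intros; apply H; lia.
   intro E. apply (H m); [lia|lra]. Qed.

Fixpoint gb (q : R) (m i : nat) : R :=
  match m, i with
  | O, O => 1
  | O, S _ => 0
  | S m', O => 1
  | S m', S i' => q ^ (S i') * gb q m' (S i') + gb q m' i'
  end.

Lemma gb_zero q m i : (m < i)%nat -> gb q m i = 0.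
Proof. revert i; induction m; intros i H; destruct i; simpl; try lia; auto.
 rewrite !IHm by lia. ring. Qed.

Lemma gb_0 q m : gb q m 0 = 1.
Proof. destruct m; reflexivity. Qed.

Lemma gb_diag q m : gb q m m = 1.
Proof. induction m; simpl; auto. rewrite gb_zero by lia. rewrite IHm. ring. Qed.

Lemma gb_closed q m i : (i <= m)%nat ->
  gb q m i * qpoch q q i * qpoch q q (m - i) = qpoch q q m.
Proof. revert i; induction m; intros i H.
 - destruct i; [simpl; ring|lia].
 - destruct i. + rewrite gb_0. simpl (S m - 0)%nat. simpl qpoch at 1. ring.
   + destruct (Nat.eq_dec i m).
     * subst. rewrite gb_diag. rewrite Nat.sub_diag. change (qpoch q q 0) with 1. ring.
     * pose proof (IHm (S i) ltac:(lia)) as H1. pose proof (IHm i ltac:(lia)) as H0.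
       replace (m - i)%nat with (S (m - S i)) in H0 by lia.
       replace (S m - S i)%nat with (S (m - S i)) by lia.
       set (d := (m - S i)%nat) in *.
       cbn [gb]. rewrite !qp_S in *.
       replace (q ^ m) with (q ^ (S i) * q ^ d) by (rewrite <- pow_add; f_equal; lia).
       set (G1 := gb q m (S i)) in *. set (G0 := gb q m i) in *.
       set (Pi := qpoch q q i) in *. set (Pd := qpoch q q d) in *. set (Pm := qpoch q q m) in *.
       transitivity (q^(S i)*(1-q*q^d)*(G1*(Pi*(1-q*q^i))*Pd) + (1-q*q^i)*(G0*Pi*(Pd*(1-q*q^d)))).
       ++ ring.
       ++ rewrite H1, H0. simpl pow. ring.
Qed.

Fixpoint hp (q : R) (i : nat) : R :=
  match i with O => 1 | S i' => hp q i' * (- q ^ i') end.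

Lemma hp_add q m s : hp q (m + s) = hp q m * hp q s * q ^ (m * s).
Proof. induction s. - rewrite Nat.add_0_r, Nat.mul_0_r; simpl; ring.
 - rewrite Nat.add_succ_r. simpl hp. rewrite IHs, Nat.mul_succ_r, !pow_add. ring. Qed.

Lemma hp_sq q j : hp q j * hp q j * q ^ j = q ^ (j * j).
Proof. induction j. - simpl; ring.
 - simpl hp. replace (S j * S j)%nat with (j * j + j + j + 1)%nat by lia.
   rewrite !pow_add, <- IHj. simpl pow. ring. Qed.

Lemma sm_shift1 N f : sm (S N) f = f O + sm N (fun i => f (S i)).
Proof. change (S N) with (1 + N)%nat. rewrite sm_add_range. simpl. ring. Qed.

Lemma rothe0 q m : forall w, sm (S m) (fun i => gb q m i * hp q i * w ^ i) = qpoch w q m.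
Proof. induction m; intros w.
 - simpl; ring.
 - rewrite sm_shift1. cbn [gb].
   rewrite (sm_ext _ _ (fun i => (gb q m (S i) * hp q (S i) * (q*w) ^ (S i))
                                  + (-w) * (gb q m i * hp q i * (q*w)^i))).
   2:{ intros i Hi. simpl hp. rewrite !Rpow_mult_distr. simpl pow. ring. }
   rewrite sm_plus, <- sm_scal, IHm.
   pose proof (IHm (q * w)) as E. rewrite sm_shift1 in E.
   rewrite (sm_extend m (S m) (fun i => gb q m (S i) * hp q (S i) * (q*w)^(S i)))
     by (try lia; intros i Hi; rewrite gb_zero by lia; ring).
   simpl in E. rewrite gb_0 in E. rewrite qp_shift.
   replace (sm m (fun i => gb q m (S i) * hp q (S i) * (q*w)^(S i))) with (qpoch (q*w) q m - 1). 2:{ rewrite <- E. simpl. ring. }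
   rewrite (Rmult_comm w q). simpl. ring.
Qed.

Lemma rothe q m N w : (m < N)%nat -> sm N (fun i => gb q m i * hp q i * w ^ i) = qpoch w q m.
Proof. intros H. rewrite (sm_extend (S m) N) by (try lia; intros i Hi; rewrite gb_zero by lia; ring).
 apply rothe0. Qed.

Lemma pow_pos' q t : 0 < q -> 0 < q ^ t.
Proof. intros; apply pow_lt; auto. Qed.

Lemma pow_le1 q t : 0 < q < 1 -> q ^ t <= 1.
Proof. intros H; induction t; simpl; [lra|]. pose proof (pow_pos' q t ltac:(lra)). nra. Qed.

Lemma Pq_nz q k : 0 < q < 1 -> qpoch q q k <> 0.
Proof. intros H; apply qp_nz; intros t _. pose proof (pow_le1 q t H). pose proof (pow_pos' q t ltac:(lra)). nra. Qed.

Lemma Pa_nz a q k : 0 < a < 1 -> 0 < q < 1 -> qpoch a q k <> 0.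
Proof. intros Ha H; apply qp_nz; intros t _. pose proof (pow_le1 q t H). pose proof (pow_pos' q t ltac:(lra)). nra. Qed.

Lemma qinv_aux q i : 0 < q -> forall d,
  qpoch (/ q ^ (i + d)) q i * qpoch q q d = hp q i * (/ q ^ (i + d)) ^ i * qpoch q q (i + d).
Proof. intros Hq. induction i; intros d.
 - simpl; ring.
 - pose proof (IHi (S d)) as E. replace (i + S d)%nat with (S i + d)%nat in E by lia.
   set (x := / q ^ (S i + d)) in *.
   rewrite qp_S in E |- *. simpl hp. simpl (x ^ S i).
   assert (Hy : x * q ^ i * (q * q ^ d) = 1).
   { unfold x. replace (S i + d)%nat with (i + S d)%nat by lia. rewrite pow_add. simpl.
     pose proof (pow_pos' q i Hq). pose proof (pow_pos' q d Hq). field. nra. }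
   transitivity (-(q^i*x)*(hp q i * x^i * qpoch q q (S i + d))); [|ring].
   rewrite <- E.
   transitivity (-(x * q^i) * qpoch x q i * qpoch q q d + (x * q ^ i * (q * q ^ d)) * qpoch x q i * qpoch q q d).
   + rewrite Hy. ring.
   + ring. Qed.

Lemma qinv_poch q m i : 0 < q < 1 ->
  qpoch (/ q ^ m) q i = hp q i * (/ q ^ m) ^ i * gb q m i * qpoch q q i.
Proof. intros H. destruct (le_lt_dec i m) as [Hi|Hi].
 - pose proof (qinv_aux q i ltac:(lra) (m - i)) as E.
   replace (i + (m - i))%nat with m in E by lia.
   pose proof (gb_closed q m i Hi) as G.
   apply (Rmult_eq_reg_r (qpoch q q (m - i))); [|apply Pq_nz; auto].
   rewrite E, <- G. ring.
 - rewrite gb_zero by auto. rewrite (qp_zero _ _ _ m) by (auto; field; apply pow_nonzero; lra). ring.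
Qed.

Lemma pow_comm_exp q i r : (q ^ i) ^ r = (q ^ r) ^ i.
Proof. rewrite <- !pow_mult, Nat.mul_comm; auto. Qed.

Lemma E_step1 q a j m N : 0 < q < 1 -> 0 < a < 1 ->
  sm N (fun i => qpoch a q (j + i) * (q ^ i * qpoch (/ q ^ m) q i / (qpoch q q i * qpoch a q i)))
  = sm (S j) (fun r => gb q j r * hp q r * a ^ r *
       sm N (fun i => gb q m i * hp q i * (q ^ (S r) * / q ^ m) ^ i)).
Proof. intros Hq Ha.
 rewrite (sm_ext N _ (fun i => sm (S j) (fun r => gb q j r * hp q r * a ^ r *
       (gb q m i * hp q i * (q ^ (S r) * / q ^ m) ^ i)))).
 - rewrite sm_swap. apply sm_ext; intros r _. rewrite sm_scal. auto.
 - intros i _. rewrite Nat.add_comm, qp_add, qinv_poch by auto.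
   rewrite <- (rothe q j (S j) (a * q ^ i)) by lia.
   rewrite sm_scal. rewrite (Rmult_comm (sm _ _)), sm_scal. apply sm_ext; intros r _.
   pose proof (Pq_nz q i Hq). pose proof (Pa_nz a q i Ha Hq).
   rewrite !Rpow_mult_distr, pow_comm_exp. simpl pow. rewrite Rpow_mult_distr. field. auto.
Qed.

Lemma zero_fac q r m : 0 < q -> (r < m)%nat -> qpoch (q ^ (S r) * / q ^ m) q m = 0.
Proof. intros Hq H. apply (qp_zero _ _ _ (m - S r)); [lia|].
 assert (Hm : q ^ m = q ^ (S r) * q ^ (m - S r)) by (rewrite <- pow_add; f_equal; lia). rewrite Hm.
 pose proof (pow_pos' q (S r) Hq). pose proof (pow_pos' q (m - S r) Hq). field. nra. Qed.

Lemma shift_fac q m s : 0 < q < 1 ->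
  qpoch (q ^ (S (m + s)) * / q ^ m) q m = qpoch q q (s + m) / qpoch q q s.
Proof. intros Hq. rewrite qp_add. replace (q ^ S (m + s) * / q ^ m) with (q * q ^ s).
 - field. apply Pq_nz; auto.
 - rewrite <- Nat.add_succ_r, pow_add. simpl. pose proof (pow_pos' q m ltac:(lra)). field. lra. Qed.

Lemma E_id q a j m N : 0 < q < 1 -> 0 < a < 1 -> (m < N)%nat ->
  sm N (fun i => qpoch a q (j + i) * (q ^ i * qpoch (/ q ^ m) q i / (qpoch q q i * qpoch a q i)))
  = qpoch a q j * a ^ m * q ^ (j * m) * qpoch (/ q ^ j) q m / qpoch a q m.
Proof. intros Hq Ha HN. rewrite E_step1 by auto.
 rewrite (sm_ext _ _ (fun r => gb q j r * hp q r * a ^ r * qpoch (q ^ (S r) * / q ^ m) q m)).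
 2:{ intros r _. rewrite rothe by auto. auto. }
 pose proof (Pa_nz a q m Ha Hq) as Ham.
 destruct (le_lt_dec m j) as [Hmj|Hmj].
 - replace (S j) with (m + S (j - m))%nat by lia. rewrite sm_add_range.
   rewrite sm_zero by (intros r Hr; rewrite zero_fac by (lra || lia); ring).
   rewrite (sm_ext _ _ (fun s => (qpoch q q j / qpoch q q (j - m) * hp q m * a ^ m) *
          (gb q (j - m) s * hp q s * (a * q ^ m) ^ s))).
   + rewrite <- sm_scal, rothe by lia.
     rewrite qinv_poch by auto.
     replace (qpoch a q j) with (qpoch a q (m + (j - m))) by (f_equal; lia). rewrite qp_add.
     pose proof (gb_closed q j m Hmj) as G.
     pose proof (Pq_nz q (j - m) Hq). pose proof (Pq_nz q m Hq).
     rewrite <- G. rewrite pow_inv, <- pow_mult.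
     pose proof (pow_pos' q (j * m) ltac:(lra)). field. repeat split; auto; lra.
   + intros s Hs. rewrite shift_fac by auto. rewrite hp_add.
     pose proof (gb_closed q j (m + s) ltac:(lia)) as G1.
     pose proof (gb_closed q (j - m) s ltac:(lia)) as G2.
     replace (j - m - s)%nat with (j - (m + s))%nat in G2 by lia.
     pose proof (Pq_nz q (j - m) Hq). pose proof (Pq_nz q s Hq).
     pose proof (Pq_nz q (m + s) Hq). pose proof (Pq_nz q (j - (m + s)) Hq).
     assert (E1 : gb q j (m + s) = qpoch q q j / (qpoch q q (m + s) * qpoch q q (j - (m + s)))).
     { rewrite <- G1. field. auto. }
     assert (E2 : gb q (j - m) s = qpoch q q (j - m) / (qpoch q q s * qpoch q q (j - (m + s)))).
     { rewrite <- G2. field. auto. }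
     rewrite E1, E2, Nat.add_comm. rewrite !Rpow_mult_distr, pow_add, pow_comm_exp, <- pow_mult.
     replace (s + m)%nat with (m + s)%nat by lia. rewrite (Nat.mul_comm s m). field. auto.
 - rewrite sm_zero by (intros r Hr; rewrite zero_fac by (lra || lia); ring).
   rewrite (qp_zero (/ q ^ j) q m j) by (auto; field; apply pow_nonzero; lra). field. auto.
Qed.

Lemma inv_zero q m k : 0 < q -> (m < k)%nat -> qpoch (/ q ^ m) q k = 0.
Proof. intros Hq H. apply (qp_zero _ _ _ m H). field. apply pow_nonzero; lra. Qed.

Lemma I2 q j k N : 0 < q < 1 -> (j < N)%nat -> (k < N)%nat ->
  sm N (fun m => q ^ (j * m) * qpoch (/ q ^ j) q m * qpoch (/ q ^ m) q k / qpoch q q m)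
  = if Nat.eqb j k then qpoch q q k / q ^ k else 0.
Proof. intros Hq Hj Hk.
 rewrite (sm_ext _ _ (fun m => hp q m * gb q j m * qpoch (/ q ^ m) q k)).
 2:{ intros m _. rewrite (qinv_poch q j m) by auto. rewrite pow_inv, <- pow_mult.
     pose proof (Pq_nz q m Hq). pose proof (pow_pos' q (j * m) ltac:(lra)). field. lra. }
 destruct (Nat.eqb_spec j k) as [<-|Hne].
 - rewrite (sm_single N j); [ | auto | intros m Hm Hmj; destruct (Nat.lt_ge_cases j m);
     [rewrite gb_zero by auto; ring | rewrite inv_zero by (lra || lia); ring]].
   rewrite gb_diag, qinv_poch, gb_diag by auto. rewrite pow_inv, <- pow_mult.
   pose proof (hp_sq q j) as Hs. rewrite <- Hs.
   pose proof (pow_pos' q j ltac:(lra)).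
   assert (hp q j <> 0).
   { intro E. rewrite E in Hs. pose proof (pow_pos' q (j * j) ltac:(lra)). nra. }
   field. lra.
 - destruct (Nat.lt_ge_cases j k).
   + apply sm_zero; intros m Hm. destruct (Nat.lt_ge_cases j m).
     * rewrite gb_zero by auto; ring.
     * rewrite inv_zero by (lra || lia); ring.
   + rewrite (sm_ext _ _ (fun m => sm (S k) (fun t => gb q k t * hp q t *
          (gb q j m * hp q m * (/ q ^ t) ^ m)))).
     2:{ intros m _. rewrite <- (rothe q k (S k) (/ q ^ m)) by lia. rewrite sm_scal.
         apply sm_ext; intros t _. rewrite !pow_inv, <- !pow_mult, Nat.mul_comm. ring. }
     rewrite sm_swap. apply sm_zero; intros t Ht.
     rewrite <- sm_scal, rothe by auto. rewrite inv_zero by (lra || lia). ring.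
Qed.

Lemma a_range q alpha : 0 < q < 1 -> alpha > -1 -> 0 < Rpower q (alpha + 1) < 1.
Proof. intros Hq Ha. unfold Rpower. split. apply exp_pos.
 apply (Rlt_le_trans _ (exp 0)); [apply exp_increasing | rewrite exp_0; lra].
 assert (ln q < 0) by (rewrite <- ln_1; apply ln_increasing; lra).
 assert (0 < alpha + 1) by lra. pose proof (Rmult_lt_compat_l (alpha+1) (ln q) 0 H0 H). lra. Qed.

Lemma AB q a n j k : 0 < q < 1 -> 0 < a < 1 -> (j <= n)%nat -> (k <= n)%nat ->
  sm (S n) (fun i => qpoch a q (j + i) * sm (S n) (fun m =>
        q ^ (i + k) * qpoch a q m * qpoch (/ q ^ m) q i * qpoch (/ q ^ m) q k
        / (qpoch q q i * qpoch q q k * qpoch a q i * qpoch a q k * qpoch q q m * a ^ m)))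
  = if Nat.eqb j k then 1 else 0.
Proof. intros Hq Ha Hj Hk.
 rewrite (sm_ext _ _ (fun i => sm (S n) (fun m => qpoch a q (j + i) *
        (q ^ i * qpoch (/ q ^ m) q i / (qpoch q q i * qpoch a q i)) *
        (q ^ k * qpoch a q m * qpoch (/ q ^ m) q k / (qpoch q q k * qpoch a q k * qpoch q q m * a ^ m))))).
 2:{ intros i _. rewrite sm_scal. apply sm_ext; intros m _.
     pose proof (Pq_nz q i Hq). pose proof (Pq_nz q k Hq). pose proof (Pq_nz q m Hq).
     pose proof (Pa_nz a q i Ha Hq). pose proof (Pa_nz a q k Ha Hq). pose proof (Pa_nz a q m Ha Hq).
     pose proof (pow_pos' a m ltac:(lra)).
     rewrite pow_add. field. repeat split; auto; lra. }
 rewrite sm_swap.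
 rewrite (sm_ext _ _ (fun m => (qpoch a q j * q ^ k / (qpoch q q k * qpoch a q k)) *
     (q ^ (j * m) * qpoch (/ q ^ j) q m * qpoch (/ q ^ m) q k / qpoch q q m))).
 2:{ intros m Hm. rewrite (sm_ext _ _
        (fun i => (q ^ k * qpoch a q m * qpoch (/ q ^ m) q k / (qpoch q q k * qpoch a q k * qpoch q q m * a ^ m)) *
        (qpoch a q (j + i) * (q ^ i * qpoch (/ q ^ m) q i / (qpoch q q i * qpoch a q i))))).
     2:{ intros; ring. }
     rewrite <- sm_scal, E_id by auto.
     pose proof (Pq_nz q k Hq). pose proof (Pq_nz q m Hq).
     pose proof (Pa_nz a q k Ha Hq). pose proof (Pa_nz a q m Ha Hq).
     pose proof (pow_pos' a m ltac:(lra)).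
     field. repeat split; auto; lra. }
 rewrite <- sm_scal, I2 by (auto; lia).
 destruct (Nat.eqb_spec j k) as [<-|]; [|ring].
 pose proof (Pq_nz q j Hq). pose proof (Pa_nz a q j Ha Hq). pose proof (pow_pos' q j ltac:(lra)).
 field. repeat split; auto; lra.
Qed.

Theorem mainTheorem12 (q alpha : R) (n : nat) :
  0 < q < 1 -> alpha > -1 ->
  is_inverse_matrix n
    (fun j k => qpoch (Rpower q (alpha + 1)) q (j + k))
    (fun j k => sum_f_R0 (fun m =>
        q ^ (j + k) * qpoch (Rpower q (alpha + 1)) q m
          * qpoch (Rpower q (- INR m)) q j * qpoch (Rpower q (- INR m)) q k
        / (qpoch q q j * qpoch q q k
           * qpoch (Rpower q (alpha + 1)) q j * qpoch (Rpower q (alpha + 1)) q k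
           * qpoch q q m * Rpower q ((alpha + 1) * INR m))) n).
Proof.
 intros Hq Hal. pose proof (a_range q alpha Hq Hal) as Ha.
 set (a := Rpower q (alpha + 1)) in *.
 assert (HB : forall j k, sum_f_R0 (fun m =>
        q ^ (j + k) * qpoch a q m
          * qpoch (Rpower q (- INR m)) q j * qpoch (Rpower q (- INR m)) q k
        / (qpoch q q j * qpoch q q k
           * qpoch a q j * qpoch a q k
           * qpoch q q m * Rpower q ((alpha + 1) * INR m))) n =
     sm (S n) (fun m => q ^ (j + k) * qpoch a q m * qpoch (/ q ^ m) q j * qpoch (/ q ^ m) q k
        / (qpoch q q j * qpoch q q k * qpoch a q j * qpoch a q k * qpoch q q m * a ^ m))).
 { intros j k. rewrite sum_f_sm. apply sm_ext; intros m _.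
   rewrite Rpower_Ropp, Rpower_pow by lra. rewrite <- Rpower_mult. fold a. rewrite Rpower_pow by lra.
   auto. }
 intros j k Hj Hk. split.
 - rewrite sum_f_sm. rewrite <- (AB q a n j k) by auto. apply sm_ext; intros i _.
   rewrite HB. auto.
 - rewrite sum_f_sm. rewrite Nat.eqb_sym. rewrite <- (AB q a n k j) by auto. apply sm_ext; intros i _.
   rewrite HB. rewrite Rmult_comm, Nat.add_comm. f_equal. apply sm_ext; intros m _.
   rewrite Nat.add_comm. field.
   pose proof (Pq_nz q i Hq). pose proof (Pq_nz q j Hq). pose proof (Pq_nz q m Hq).
   pose proof (Pa_nz a q i Ha Hq). pose proof (Pa_nz a q j Ha Hq). pose proof (Pa_nz a q m Ha Hq).
   pose proof (pow_pos' a m ltac:(lra)). repeat split; auto; lra.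
Qed.
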